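(* Let $p\ge2$ and $m\ge1$ be integers and $d=2p$. There exist $W\in\mathbb{R}^{2p\times p}$ and $V\in\mathbb{R}^{p\times 2p}$ such that the sine network $s^\theta(x)=V\sin(Wx)$ satisfies, for every $x\in\mathcal{X}_m$, $s^\theta_{y(x)}(x)=p$ and $s^\theta_q(x)=0$ for all $q\ne y(x)$ (so $h_\theta(x)=y(x)$ with margin $p$), and moreover $\|V\|_2=\sqrt p$ and $\|W\|_F\le\pi\sqrt2\,p$.
   Context: Let $[p]=\{0,\dots,p-1\}$ and $\mathcal{X}_m=\{x\in\{0,\dots,m\}^p:\|x\|_1=m\}$, coordinates indexed by $[p]$; $y(x)=(\sum_{r\in[p]}r\,x_r)\bmod p$. $\sin$ is applied entrywise. The predictor is $h_\theta(x)=\ell$ if $s^\theta_\ell(x)>s^\theta_k(x)$ for all $k\ne\ell$, and $\bot$ otherwise. $\|V\|_2$ is the spectral norm and $\|W\|_F$ the Frobenius norm. *)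

(* Defs.v *)
From HB Require Import structures.
From mathcomp Require Import all_boot all_order all_algebra.
From mathcomp Require Import all_classical all_reals all_analysis.
Unset Printing Implicit Defensive.
Import Order.TTheory GRing.Theory Num.Theory.
Local Open Scope ring_scope.
Local Open Scope classical_set_scope.

Definition Xm (p m : nat) : set ('I_p -> nat) :=
  [set x | (forall r, (x r <= m)%N) /\ (\sum_(r < p) x r)%N = m].

Definition ylab (p : nat) (x : 'I_p -> nat) : nat :=
  ((\sum_(r < p) (r : nat) * x r) %% p)%N.

Definition xvec (R : realType) (p : nat) (x : 'I_p -> nat) : 'cV[R]_p :=
  \col_(r < p) ((x r)%:R).

Definition sine_net (R : realType) (p d : nat)
  (W : 'M[R]_(d, p)) (V : 'M[R]_(p, d)) (x : 'I_p -> nat) : 'cV[R]_p :=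
  V *m map_mx (@sin R) (W *m xvec R p x).

Definition l2norm (R : realType) (n : nat) (u : 'cV[R]_n) : R :=
  Num.sqrt (\sum_(i < n) (u i 0) ^+ 2).

Definition frob_norm (R : realType) (m n : nat) (A : 'M[R]_(m, n)) : R :=
  Num.sqrt (\sum_(i < m) \sum_(j < n) (A i j) ^+ 2).

Definition spec_norm (R : realType) (m n : nat) (A : 'M[R]_(m, n)) : R :=
  sup ((fun u : 'cV[R]_n => l2norm R m (A *m u)) @` [set u | l2norm R n u = 1]).

(* Main.v *)
Require Import Defs.
From HB Require Import structures.
From mathcomp Require Import all_boot all_order all_algebra.
From mathcomp Require Import all_classical all_reals all_analysis.
From mathcomp Require Import ring lra.
Import Order.TTheory GRing.Theory Num.Theory.
Local Open Scope classical_set_scope.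
Local Open Scope ring_scope.

Section S.
Variable R : realType.

Lemma sin_per_nat (a : R) (n : nat) : sin (a + (pi *+ 2) *+ n) = sin a.
Proof. exact: (periodicn (@sinD2pi R) n a). Qed.
Lemma cos_per_nat (a : R) (n : nat) : cos (a + (pi *+ 2) *+ n) = cos a.
Proof. exact: (periodicn (@cosD2pi R) n a). Qed.

Lemma sin_per_int (a : R) (z : int) : sin (a + (pi *+ 2) *~ z) = sin a.
Proof.
case: z => n; first by rewrite sin_per_nat.
rewrite NegzE mulrNz -[in RHS](subrK ((pi *+ 2) *~ n.+1) a).
by rewrite -mulrz_nat sin_per_nat.
Qed.

Lemma sum_cos0 (p j : nat) : (0 < j < p)%N ->
  \sum_(i < p) cos (pi *+ 2 * (i * j)%:R / p%:R) = 0 :> R.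
Proof.
move=> /andP[j0 jp].
have p0 : (0 < p)%N by apply: leq_ltn_trans jp.
have pn : p%:R != 0 :> R by rewrite pnatr_eq0 -lt0n.
set th : R := pi *+ 2 * j%:R / p%:R.
have E i : pi *+ 2 * (i * j)%:R / p%:R = i%:R * th.
  by rewrite /th natrM; field.
pose f k := sin (k%:R * th - th / 2).
have Hs : 0 < sin (th / 2).
  have -> : th / 2 = pi * (j%:R / p%:R).
    by rewrite /th -mulr_natr; field.
  have hj : 0 < j%:R / p%:R :> R by rewrite divr_gt0 // ltr0n.
  have hj1 : j%:R / p%:R < 1 :> R by rewrite ltr_pdivrMr ?ltr0n // mul1r ltr_nat.
  apply: sin_gt0_pi; apply/andP; split; first by rewrite mulr_gt0 ?pi_gt0.
  by rewrite -[X in _ < X]mulr1 ltr_pM2l ?pi_gt0.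
have T : \sum_(0 <= k < p) (f k.+1 - f k) = (sin (th / 2) *+ 2) * \sum_(i < p) cos (pi *+ 2 * (i * j)%:R / p%:R).
  rewrite mulr_sumr -(big_mkord xpredT (fun i => sin (th / 2) *+ 2 * cos (pi *+ 2 * (i * j)%:R / p%:R))).
  apply: eq_bigr => k _; rewrite /f E -addn1 natrD mulrDl mul1r.
  have -> : k%:R * th + th - th / 2 = k%:R * th + th / 2.
    by field.
  rewrite sinD sinB; lra.
move: T; rewrite telescope_sumr // /f.
have -> : p%:R * th - th / 2 = - (th / 2) + (pi *+ 2) *+ j.
  by rewrite /th -mulr_natr; field.
rewrite sin_per_nat mul0r sub0r subrr => /esym /eqP.
rewrite mulf_eq0 => /orP[|/eqP //].
by rewrite mulrn_eq0 /= (gt_eqF Hs).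
Qed.

Definition ang (p n : nat) : R := pi *+ 2 * n%:R / p%:R.

Definition Vf (p q i : nat) : R :=
  if (i < p)%N then cos (ang p (i * q)) else sin (ang p ((i - p) * q)).

Lemma sum_split2 (p : nat) (F : nat -> R) :
  \sum_(i < 2 * p) F i = \sum_(i < p) (F i + F (i + p)%N).
Proof.
rewrite -(big_mkord xpredT F) mul2n -addnn (big_cat_nat _ (leq_addr p p)) //=.
have -> : \sum_(p <= i < p + p) F i = \sum_(0 <= i < p) F (i + p)%N.
  by rewrite -{1}(add0n p) big_addn addnK.
by rewrite -big_split /= big_mkord.
Qed.

Lemma ang_sub p i q y : (y <= q)%N -> ang p (i * q) - ang p (i * y) = ang p (i * (q - y)).
Proof. move=> yq; rewrite /ang mulnBr natrB ?leq_mul2l ?yq ?orbT //; by rewrite mulrBr mulrBl. Qed.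

Lemma gram p q y : (q < p)%N -> (y < p)%N ->
  \sum_(i < 2 * p) Vf p q i * Vf p y i = if q == y then p%:R else 0.
Proof.
move=> qp yp; rewrite (sum_split2 p (fun i => Vf p q i * Vf p y i)).
under eq_bigr => i _.
  rewrite /Vf ltn_ord (_ : (i + p < p)%N = false); last by rewrite ltnNge leq_addl.
  rewrite addnK -cosB.
  over.
case: eqP => [<-|/eqP qy].
  under eq_bigr do rewrite subrr cos0.
  by rewrite sumr_const card_ord.
case: (leqP y q) => H.
  under eq_bigr do rewrite ang_sub //.
  rewrite (eq_bigr (fun i : 'I_p => cos (pi *+ 2 * (i * (q - y))%:R / p%:R))) //.
  apply: sum_cos0; rewrite subn_gt0 ltn_neqAle eq_sym qy H /=.
  by apply: leq_ltn_trans qp; rewrite leq_subr.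
under eq_bigr do rewrite -cosN opprB ang_sub ?(ltnW H) //.
rewrite (eq_bigr (fun i : 'I_p => cos (pi *+ 2 * (i * (y - q))%:R / p%:R))) //.
apply: sum_cos0; rewrite subn_gt0 H /=.
by apply: leq_ltn_trans yp; rewrite leq_subr.
Qed.

Definition red (a : R) : R := a - (pi *+ 2) *~ Num.floor (a / (pi *+ 2) + 2^-1).

Lemma sin_red_sum (p : nat) (a : 'I_p -> R) (n : 'I_p -> nat) :
  sin (\sum_(r < p) red (a r) * (n r)%:R) = sin (\sum_(r < p) a r * (n r)%:R).
Proof.
set z := fun r => Num.floor (a r / (pi *+ 2) + 2^-1).
have -> : \sum_(r < p) red (a r) * (n r)%:R =
   \sum_(r < p) a r * (n r)%:R + (pi *+ 2) *~ (- \sum_(r < p) (z r * (n r)%:Z)).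
  rewrite -mulrzr rmorphN /= rmorph_sum /= mulrN mulr_sumr -sumrN -big_split /=.
  apply: eq_bigr => r _; rewrite /red -/(z r) -mulrzr rmorphM /= -pmulrn.
  ring.
by rewrite sin_per_int.
Qed.

Lemma ang_addmul p a k : (0 < p)%N -> ang p (a + k * p) = ang p a + (pi *+ 2) *+ k.
Proof.
move=> p0; have pn : p%:R != 0 :> R by rewrite pnatr_eq0 -lt0n.
by rewrite /ang natrD natrM -mulr_natr; field.
Qed.

Lemma ang_sum p (n : 'I_p -> nat) (F : 'I_p -> nat) :
  \sum_(r < p) ang p (F r) * (n r)%:R = ang p (\sum_(r < p) F r * n r)%N.
Proof.
rewrite /ang natr_sum mulr_sumr mulr_suml; apply: eq_bigr => r _.
by rewrite natrM; ring.
Qed.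

Definition af (p m i r : nat) : R :=
  if (i < p)%N then ang p (i * r) + pi / (2 * m)%:R else ang p ((i - p) * r).

Lemma net_entry p m (x : 'I_p -> nat) (i : nat) : (0 < p)%N -> (0 < m)%N ->
  (\sum_(r < p) x r)%N = m ->
  sin (\sum_(r < p) red (af p m i r) * (x r)%:R) = Vf p (ylab p x) i.
Proof.
move=> p0 m0 hs; rewrite sin_red_sum /af /Vf /ylab.
set S := (\sum_(r < p) r * x r)%N.
have hS : S = (S %% p + S %/ p * p)%N by rewrite addnC -divn_eq.
case: ifP => ip.
  under eq_bigr do rewrite mulrDl. rewrite big_split /= -mulr_sumr (ang_sum p x (fun r : 'I_p => i * r))%N.
  have -> : (\sum_(r < p) (i * r) * x r = i * S)%N.
    by rewrite /S big_distrr; apply: eq_bigr => r _; rewrite /= mulnA.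
  have -> : \sum_(r < p) (x r)%:R = m%:R :> R by rewrite -natr_sum hs.
  have mn : m%:R != 0 :> R by rewrite pnatr_eq0 -lt0n.
  have -> : pi / (2 * m)%:R * m%:R = pi / 2 :> R by rewrite natrM; field.
  rewrite sinDpihalf {1}hS mulnDr mulnA ang_addmul // cos_per_nat //.
move: (ang_sum p x (fun r : 'I_p => ((i - p) * r)%N)) => /= ->.
have -> : (\sum_(r < p) ((i - p) * r) * x r = (i - p) * S)%N.
  by rewrite /S big_distrr; apply: eq_bigr => r _; rewrite /= mulnA.
by rewrite {1}hS mulnDr mulnA ang_addmul // sin_per_nat.
Qed.

Lemma sumsqE n (u : 'cV[R]_n) : \sum_(i < n) (u i 0) ^+ 2 = (u^T *m u) 0 0.
Proof. by rewrite !mxE; apply: eq_bigr => i _; rewrite !mxE expr2. Qed.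

Lemma sq_ge0 n (u : 'cV[R]_n) : 0 <= (u^T *m u) 0 0.
Proof. by rewrite -sumsqE; apply: sumr_ge0 => i _; rewrite sqr_ge0. Qed.

Lemma l2normE n (u : 'cV[R]_n) : l2norm R n u = Num.sqrt ((u^T *m u) 0 0).
Proof. by rewrite /l2norm sumsqE. Qed.

Arguments sq_ge0 {n}.
Arguments l2normE {n}.
Arguments sumsqE {n}.
Lemma key_ineq n k (V : 'M[R]_(n, k)) (c : R) (u : 'cV[R]_k) : 0 < c ->
  V *m V^T = c%:M -> ((V *m u)^T *m (V *m u)) 0 0 <= c * (u^T *m u) 0 0.
Proof.
move=> c0 VV.
set w := V *m u.
set z := c *: u - V^T *m w.
have E : z^T *m z = c *: (c *: (u^T *m u) - w^T *m w).
  have zt : z^T = c *: u^T - w^T *m V.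
    by rewrite /z linearB /= linearZ /= trmx_mul trmxK.
  rewrite zt /z.
  rewrite mulmxBl mulmxBr mulmxBr -!scalemxAl -!scalemxAr.
  have h1 : u^T *m (V^T *m w) = w^T *m w by rewrite mulmxA -trmx_mul.
  have h2 : w^T *m V *m (V^T *m w) = c *: (w^T *m w).
    by rewrite mulmxA -(mulmxA w^T) VV mul_mx_scalar -scalemxAl.
  have h3 : w^T *m V *m u = w^T *m w by rewrite -mulmxA.
  rewrite h1 h2 h3 scalerA scalerBr scalerA.
  by rewrite subrr subr0.
have := sq_ge0 z; rewrite E !mxE (pmulr_rge0 _ c0).
by rewrite subr_ge0.
Qed.

Arguments key_ineq {n k V c}.
Lemma spec_norm_eq n k (V : 'M[R]_(n, k)) (c : R) (i0 : 'I_n) : 0 < c ->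
  V *m V^T = c%:M -> spec_norm R n k V = Num.sqrt c.
Proof.
move=> c0 VV.
set E := (fun u : 'cV[R]_k => l2norm R n (V *m u)) @` [set u | l2norm R k u = 1].
have ub : ubound E (Num.sqrt c).
  move=> _ [u hu <-]; rewrite l2normE.
  have hu1 : (u^T *m u) 0 0 = 1.
    by rewrite -(sqr_sqrtr (sq_ge0 u)) -l2normE hu expr1n.
  rewrite ler_sqrt ?(ltW c0) //.
  by have := key_ineq u c0 VV; rewrite hu1 mulr1.
set s := Num.sqrt c.
have s0 : 0 < s by rewrite sqrtr_gt0.
have ss : s * s = c by rewrite -expr2 sqr_sqrtr // ltW.
set e : 'cV[R]_n := delta_mx i0 0.
have ee : e^T *m e = delta_mx 0 0 by rewrite trmx_delta mul_delta_mx.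
set u0 := s^-1 *: (V^T *m e).
have Vu : V *m u0 = (s^-1 * c) *: e.
  by rewrite /u0 -scalemxAr mulmxA VV mul_scalar_mx scalerA.
have uu : u0^T *m u0 = (s^-1 * s^-1 * c) *: delta_mx 0 0.
  have ut : u0^T = s^-1 *: (e^T *m V) by rewrite /u0 linearZ /= trmx_mul trmxK.
  rewrite ut /u0 -scalemxAl -scalemxAr scalerA.
  by rewrite mulmxA -(mulmxA e^T) VV mul_mx_scalar -scalemxAl ee scalerA.
have Eu : E s.
  exists u0.
    rewrite /= l2normE uu !mxE eqxx mulr1 -ss.
    have -> : s^-1 / s * (s * s) = 1 by field; rewrite gt_eqF.
    by rewrite sqrtr1.
  have wt : (V *m u0)^T = (s^-1 * c) *: e^T by rewrite Vu linearZ.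
  rewrite l2normE wt Vu -scalemxAl -scalemxAr ee scalerA !mxE eqxx mulr1.
  rewrite -ss -/s.
  have -> : s^-1 * (s * s) * (s^-1 * (s * s)) = s ^+ 2.
    by field; rewrite gt_eqF.
  by rewrite sqrtr_sqr gtr0_norm.
apply/eqP; rewrite eq_le; apply/andP; split.
  by apply: ge_sup => //; exists s.
by apply: ub_le_sup => //; exists s.
Qed.

Lemma red_bound (a : R) : red a ^+ 2 <= pi ^+ 2.
Proof.
set T : R := pi *+ 2.
have T0 : 0 < T by rewrite mulrn_wgt0 ?pi_gt0.
set t := a / T + 2^-1.
have h1 := Rfloor_le t; have h2 := lt_succ_Rfloor t.
rewrite RfloorE in h1 h2.
have -> : red a = pi * ((t - (Num.floor t)%:~R) *+ 2 - 1).
  have aE : a = T * (t - 2^-1) by rewrite /t addrK mulrC divfK ?gt_eqF.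
  rewrite /red -/t -mulrzr {1}aE /T -mulr_natr; field; by [].
rewrite exprMn -[X in _ <= X]mulr1 ler_pM2l ?exprn_gt0 ?pi_gt0 //.
rewrite -[_ <= 1]ler_sqrt ?ler01 // sqrtr1 sqrtr_sqr.
rewrite ler_norml; apply/andP; split; rewrite mulr2n; lra.
Qed.
End S.
Arguments gram {R p q y}.
Arguments spec_norm_eq {R n k V c}.
Arguments red_bound {R}.

Local Close Scope classical_set_scope.

Theorem mainTheorem12 (R : realType) (p m : nat) (hp : (2 <= p)%N) (hm : (1 <= m)%N) :
  exists (W : 'M[R]_((2 * p)%N, p)) (V : 'M[R]_(p, (2 * p)%N)),
    (forall x : 'I_p -> nat, Xm p m x ->
       forall q : 'I_p,
         @sine_net R p (2 * p)%N W V x q 0 = (if (q : nat) == ylab p x then p%:R else 0)) /\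
    spec_norm R p (2 * p)%N V = Num.sqrt (p%:R) /\
    frob_norm R (2 * p)%N p W <= pi * Num.sqrt 2 * p%:R.
Proof.
have p0 : (0 < p)%N by apply: leq_trans hp.
pose W : 'M[R]_((2 * p)%N, p) := \matrix_(i, r) red R (af R p m i r).
pose V : 'M[R]_(p, (2 * p)%N) := \matrix_(q, i) Vf R p q i.
exists W, V; split; [|split].
- move=> x [xb hs] q; rewrite /sine_net !mxE.
  transitivity (\sum_(i < 2 * p) Vf R p q i * Vf R p (ylab p x) i).
    apply: eq_bigr => i _; rewrite !mxE; congr (_ * _).
    rewrite -(net_entry R p m x i p0 hm hs); congr sin.
    by apply: eq_bigr => r _; rewrite !mxE.
  by rewrite gram // ltn_pmod.
- apply: (spec_norm_eq (Ordinal p0)); first by rewrite ltr0n.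
  apply/matrixP => q q'; rewrite !mxE.
  transitivity (\sum_(i < 2 * p) Vf R p q i * Vf R p q' i).
    by apply: eq_bigr => i _; rewrite !mxE.
  by rewrite gram // val_eqE; case: (q == q').
- rewrite /frob_norm.
  have H : \sum_(i < 2 * p) \sum_(j < p) W i j ^+ 2 <= (pi ^+ 2 * 2) * p%:R ^+ 2.
    apply: (@le_trans _ _ (\sum_(i < 2 * p) \sum_(j < p) pi ^+ 2)).
      apply: ler_sum => i _; apply: ler_sum => j _; rewrite mxE; exact: red_bound.
    rewrite sumr_const card_ord sumr_const card_ord -mulrnA -[leLHS]mulr_natr !natrM.
    by rewrite le_eqVlt; apply/orP; left; apply/eqP; ring.
  have rge : 0 <= pi * Num.sqrt 2 * p%:R :> R.
    by rewrite mulr_ge0 ?ler0n // mulr_ge0 ?sqrtr_ge0 // pi_ge0.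
  rewrite -(ger0_norm rge) -sqrtr_sqr ler_sqrt ?sqr_ge0 //.
  by rewrite !exprMn sqr_sqrtr ?ler0n.
Qed.
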